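(* Let $0<q<1$. Define the $q$-Bernoulli numbers $b_{n,q}$ and $q$-Bernoulli polynomials $B_{n,q}(x)$ by \[ \frac{t}{e_q(t)-1}=\sum_{n=0}^\infty b_{n,q}\frac{t^n}{[n]_q!},\qquad \frac{t}{e_q(t)-1}e_q(tx)=\sum_{n=0}^\infty B_{n,q}(x)\frac{t^n}{[n]_q!} \] (for $t$ in a neighborhood of $0$). Then for every integer $n\ge1$, \[ B_{n,q}(qx)=q^n\left(x-\frac{1}{q[2]_q}\right)B_{n-1,q}(x)-\frac{1}{[n]_q}\sum_{k=0}^{n-2}\begin{bmatrix}n\\k\end{bmatrix}_q q^{k-1}b_{n-k,q}B_{k,q}(x). \]
   Context: $[n]_q=\frac{1-q^n}{1-q}$, $[0]_q!=1$, $[n]_q!=[n]_q\cdots[1]_q$, $\begin{bmatrix}n\\k\end{bmatrix}_q=\frac{[n]_q!}{[k]_q![n-k]_q!}$, and $e_q(t)=\sum_{n\ge0}\frac{t^n}{[n]_q!}$. *)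

(* Defs.v *)
From Stdlib Require Import Reals.
From Coquelicot Require Import Coquelicot.
Open Scope R_scope.

Definition qint (q : R) (n : nat) : R := (1 - q ^ n) / (1 - q).

Fixpoint qfact (q : R) (n : nat) : R :=
  match n with
  | O => 1
  | S m => qint q (S m) * qfact q m
  end.

Definition qbinom (q : R) (n k : nat) : R :=
  qfact q n / (qfact q k * qfact q (n - k)).

Definition eq_exp (q t : R) : R := Series (fun n => t ^ n / qfact q n).

(* sumR f m = f 0 + ... + f (m-1)  (empty sum = 0 when m = 0) *)
Fixpoint sumR (f : nat -> R) (m : nat) : R :=
  match m with
  | O => 0
  | S m' => sumR f m' + f m'
  end.

(* Main.v *)
Require Import Defs.
From Stdlib Require Import Reals Lra Lia.
From Coquelicot Require Import Coquelicot.
Open Scope R_scope.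
Ltac req := match goal with |- ?a = ?b => change (@eq R a b) end.
Lemma is_series_zero : is_series (fun _ : nat => 0) 0.
Proof.
  assert (H := @is_pseries_0 R_AbsRing R_NormedModule (fun _ => 0)).
  unfold is_pseries in H.
  exact (is_series_ext _ _ _ (fun n => scal_zero_r _) H).
Qed.
Lemma is_pseries_eqv (a : nat -> R) x (l l' : R) : is_pseries a x l -> l = l' -> is_pseries a x l'.
Proof. intros H <-; exact H. Qed.
Lemma is_series_eqv (a : nat -> R) (l l' : R) : is_series a l -> l = l' -> is_series a l'.
Proof. intros H <-; exact H. Qed.
Lemma e0_pseries t : is_pseries (fun n => match n with O => 1 | S _ => 0 end) t 1.
Proof.
  apply is_pseries_R. apply is_series_decr_1.
  apply (is_series_eqv _ 0).
  - apply (is_series_ext (fun _ => 0)). intros k. simpl. req. ring. apply is_series_zero.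
  - unfold plus, opp. simpl. req. ring.
Qed.

Lemma LR (a : nat -> R) (r : R) : 0 < r -> ex_pseries a r -> Rbar_le r (CV_radius a).
Proof.
  intros Hr [l Hl].
  destruct (CV_radius_bounded a) as [Hub _].
  apply Hub.
  apply is_pseries_R in Hl.
  assert (H0 := ex_series_lim_0 _ (ex_intro _ l Hl)).
  apply is_lim_seq_Reals in H0.
  destruct (maj_by_pos (fun n => a n * r ^ n)) as [M [_ HM]].
  - exists 0; exact H0.
  - exists M; exact HM.
Qed.

Lemma cont_zero (f : R -> R) (d : R) : 0 < d -> continuity_pt f 0 ->
  (forall t, 0 < t < d -> f t = 0) -> f 0 = 0.
Proof.
  intros Hd Hc Hf.
  unfold continuity_pt, continue_in, limit1_in, limit_in in Hc.
  destruct (Req_dec (f 0) 0) as [E|E]; [exact E|exfalso].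
  assert (Hp := Rabs_pos_lt _ E). destruct (Hc (Rabs (f 0)) Hp) as [alp [Ha H]].
  set (y := Rmin alp d / 2).
  assert (Hy1 : 0 < y) by (unfold y; assert (0 < Rmin alp d) by (apply Rmin_glb_lt; lra); lra).
  assert (Hy2 : y < alp) by (unfold y; assert (Rmin alp d <= alp) by apply Rmin_l; lra).
  assert (Hy3 : y < d) by (unfold y; assert (Rmin alp d <= d) by apply Rmin_r; assert (0 < Rmin alp d) by (apply Rmin_glb_lt; lra); lra).
  specialize (H y).
  assert (Hyd : dist R_met (f y) (f 0) < Rabs (f 0)).
  { apply H. split. split; [exact I| lra].
    simpl. unfold R_dist. rewrite Rminus_0_r, Rabs_pos_eq; lra. }
  simpl in Hyd. unfold R_dist in Hyd. rewrite Hf in Hyd by lra.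
  rewrite Rminus_0_l, Rabs_Ropp in Hyd. lra.
Qed.

Lemma unique0 (c : nat -> R) (d : R) : 0 < d ->
  (forall t, 0 < t < d -> is_pseries c t 0) -> forall n, c n = 0.
Proof.
  intros Hd H n.
  induction n as [n IH] using (well_founded_induction Wf_nat.lt_wf).
  assert (Hdec : forall t, 0 < t < d -> is_pseries (PS_decr_n c n) t (PSeries (PS_decr_n c n) t) /\
                  PSeries (PS_decr_n c n) t = 0).
  { intros t Ht.
    assert (Hex : ex_pseries (PS_decr_n c n) t).
    { apply ex_pseries_decr_n. right. exists (/ t). change (/ t * t = 1). field. lra.
      exists 0. apply H. exact Ht. }
    split. apply PSeries_correct. exact Hex.
    assert (E1 := is_pseries_unique _ _ _ (H t Ht)).
    rewrite (PSeries_decr_n_aux c n t) in E1 by (intros k Hk; apply IH; exact Hk).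
    apply Rmult_integral in E1. destruct E1 as [E1|E1]; [|exact E1].
    exfalso. apply (pow_nonzero t n); lra. }
  assert (Hrad : Rbar_lt 0 (CV_radius (PS_decr_n c n))).
  { apply Rbar_lt_le_trans with (d/2). simpl; lra.
    apply LR. lra. eexists. apply (proj1 (Hdec (d/2) ltac:(lra))). }
  assert (Hc : continuity_pt (PSeries (PS_decr_n c n)) 0).
  { apply PSeries_continuity. rewrite Rabs_R0. exact Hrad. }
  assert (Z := cont_zero _ d Hd Hc (fun t Ht => proj2 (Hdec t Ht))).
  rewrite PSeries_0 in Z. unfold PS_decr_n in Z. rewrite Nat.add_0_r in Z. exact Z.
Qed.



Definition epsq (q : R) (n : nat) : R := / qfact q n.

Lemma qpow_bounds q n : 0 < q < 1 -> 0 < q ^ n <= 1.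
Proof.
  intros Hq. induction n; simpl. lra.
  split. apply Rmult_lt_0_compat; lra. nra.
Qed.

Lemma qint_ge1 q n : 0 < q < 1 -> (1 <= n)%nat -> 1 <= qint q n.
Proof.
  intros Hq Hn. destruct n. lia. unfold qint.
  assert (H := qpow_bounds q n Hq). simpl.
  apply (Rmult_le_reg_r (1 - q)). lra.
  unfold Rdiv. rewrite Rmult_assoc, Rinv_l by lra. nra.
Qed.

Lemma qfact_ge1 q n : 0 < q < 1 -> 1 <= qfact q n.
Proof.
  intros Hq. induction n; simpl. lra.
  assert (H := qint_ge1 q (S n) Hq ltac:(lia)). nra.
Qed.

Lemma E_pseries q t : 0 < q < 1 -> Rabs t < 1 -> is_pseries (epsq q) t (eq_exp q t).
Proof.
  intros Hq Ht. apply is_pseries_R.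
  apply is_series_ext with (fun n => t ^ n / qfact q n).
  { intros n. unfold epsq, Rdiv. req. ring. }
  unfold eq_exp. apply Series_correct.
  apply (@ex_series_le R_AbsRing R_CompleteNormedModule) with (fun n => Rabs t ^ n).
  - intros n. change (norm (t ^ n / qfact q n)) with (Rabs (t ^ n / qfact q n)).
    assert (H := qfact_ge1 q n Hq).
    unfold Rdiv. rewrite Rabs_mult, RPow_abs, Rabs_Rinv by lra.
    rewrite (Rabs_pos_eq (qfact q n)) by lra.
    assert (0 <= Rabs t ^ n) by (apply pow_le; apply Rabs_pos).
    assert (0 < / qfact q n <= 1). { split. apply Rinv_0_lt_compat; lra.
      rewrite <- Rinv_1. apply Rinv_le_contravar; lra. }
    rewrite <- RPow_abs. nra.
  - apply ex_series_geom. rewrite Rabs_Rabsolu. exact Ht.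
Qed.

Lemma E_shift q s : 0 < q < 1 -> Rabs s < 1 ->
  eq_exp q (q * s) = eq_exp q s - (1 - q) * s * eq_exp q s.
Proof.
  intros Hq Hs.
  assert (Hqs : Rabs (q * s) < 1).
  { rewrite Rabs_mult, (Rabs_pos_eq q) by lra. assert (0 <= Rabs s) by apply Rabs_pos. nra. }
  assert (H1 := E_pseries q (q * s) Hq Hqs).
  assert (H2 := E_pseries q s Hq Hs).
  assert (H3 := is_pseries_minus _ _ _ _ _ H2 (is_pseries_scal (1 - q) _ _ _ (Rmult_comm _ _) (is_pseries_incr_1 _ _ _ H2))).
  apply is_pseries_R in H1. apply is_pseries_R in H3.
  apply (is_series_ext _ (fun n => epsq q n * (q * s) ^ n)) in H3.
  - assert (E := eq_trans (eq_sym (is_series_unique _ _ H1)) (is_series_unique _ _ H3)). rewrite E.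
    change (eq_exp q s - (1 - q) * (s * eq_exp q s) = eq_exp q s - (1 - q) * s * eq_exp q s). ring.
  - intros n. destruct n.
    + change ((epsq q 0 - (1 - q) * 0) * s ^ 0 = epsq q 0 * (q * s) ^ 0). simpl. ring.
    + change ((epsq q (S n) - (1 - q) * epsq q n) * s ^ (S n) = epsq q (S n) * (q * s) ^ (S n)).
      unfold epsq. simpl qfact. assert (H := qfact_ge1 q n Hq).
      assert (Hn := qpow_bounds q (S n) Hq).
      assert (q ^ S n < 1). { simpl. assert (H5 := qpow_bounds q n Hq). nra. }
      rewrite Rpow_mult_distr. unfold qint. simpl. field. simpl in *. lra.
Qed.



Lemma E_gt1 q t : 0 < q < 1 -> 0 < t < 1 -> 1 + t <= eq_exp q t.
Proof.
  intros Hq Ht.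
  assert (Ht' : Rabs t < 1) by (rewrite Rabs_pos_eq; lra).
  assert (H := E_pseries q t Hq Ht').
  assert (Hex : ex_pseries (epsq q) t) by (eexists; exact H).
  rewrite <- (is_pseries_unique _ _ _ H).
  rewrite (PSeries_decr_n _ 1 t Hex).
  assert (0 <= PSeries (PS_decr_n (epsq q) 2) t).
  { assert (Hex2 : ex_pseries (PS_decr_n (epsq q) 2) t).
    { apply ex_pseries_decr_n. right. exists (/ t). change (/ t * t = 1). field. lra. exact Hex. }
    destruct Hex2 as [l Hl].
    rewrite (is_pseries_unique _ _ _ Hl).
    apply is_pseries_R in Hl.
    rewrite <- (is_series_unique _ _ Hl).
    apply Rle_trans with (Series (fun _ => 0)).
    right; symmetry; exact (is_series_unique _ _ is_series_zero).
    apply Series_le. intros n. split. lra.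
    unfold PS_decr_n, epsq. apply Rmult_le_pos. left. apply Rinv_0_lt_compat.
    assert (H1 := qfact_ge1 q (2 + n) Hq). lra. apply pow_le; lra.
    eexists; exact Hl. }
  set (P := PSeries (PS_decr_n (epsq q) 2) t) in *.
  simpl. unfold epsq. simpl. unfold qint. simpl.
  replace ((1 - q * 1) / (1 - q) * 1) with 1 by (field; lra).
  assert (0 <= t * (t * 1) * P) by (apply Rmult_le_pos; nra).
  rewrite Rinv_1. lra.
Qed.


Lemma sumR_ext f g m : (forall k, f k = g k) -> sumR f m = sumR g m.
Proof. intros H; induction m; simpl; [reflexivity| rewrite IHm, H; reflexivity]. Qed.
Lemma sumR_scal c f m : sumR (fun k => c * f k) m = c * sumR f m.
Proof. induction m; simpl. ring. rewrite IHm. ring. Qed.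
Lemma sum_f_R0_sumR f n : sum_f_R0 f n = sumR f (S n).
Proof. induction n; simpl. ring. rewrite IHn. simpl. reflexivity. Qed.

Theorem theorem3 (q : R) (hq0 : 0 < q) (hq1 : q < 1)
  (b : nat -> R) (B : nat -> R -> R)
  (hb : exists eps : R, 0 < eps /\
        forall t : R, 0 < Rabs t < eps ->
          is_series (fun n => b n * t ^ n / qfact q n)
                    (t / (eq_exp q t - 1)))
  (hB : forall x : R, exists eps : R, 0 < eps /\
        forall t : R, 0 < Rabs t < eps ->
          is_series (fun n => B n x * t ^ n / qfact q n)
                    (t / (eq_exp q t - 1) * eq_exp q (t * x))) :
  forall (n : nat) (x : R), (1 <= n)%nat ->
    B n (q * x) =
      q ^ n * (x - 1 / (q * qint q 2)) * B (n - 1)%nat x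
      - 1 / qint q n *
        sumR (fun k => qbinom q n k * (q ^ k / q) * b (n - k)%nat * B k x)
             (n - 1)%nat.
Proof.
  intros n x Hn.
  assert (Hq : 0 < q < 1) by lra.
  destruct hb as [e1 [He1 Hb]].
  destruct (hB x) as [e2 [He2 HBx]].
  destruct (hB (q * x)) as [e3 [He3 HBqx]].
  clear hB.
  set (beta := fun k => b k / qfact q k).
  set (gx := fun k => B k x / qfact q k).
  set (gqx := fun k => B k (q * x) / qfact q k).
  set (qg := fun k => q ^ k * gx k).
  set (d := Rmin (Rmin e1 e2) (Rmin e3 (/ (2 * (Rabs x + 1))))).
  assert (Hax : 0 <= Rabs x) by apply Rabs_pos.
  assert (Hd0 : 0 < d).
  { unfold d. apply Rmin_glb_lt; apply Rmin_glb_lt; try lra. apply Rinv_0_lt_compat; lra. }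
  assert (Hd1 : d <= e1 /\ d <= e2 /\ d <= e3 /\ d <= / (2 * (Rabs x + 1))).
  { unfold d. repeat split.
    - eapply Rle_trans; [apply Rmin_l|apply Rmin_l].
    - eapply Rle_trans; [apply Rmin_l|apply Rmin_r].
    - eapply Rle_trans; [apply Rmin_r|apply Rmin_l].
    - eapply Rle_trans; [apply Rmin_r|apply Rmin_r]. }
  assert (Hrng : forall t, 0 < t < d -> t < 1/2 /\ Rabs (t * x) < 1/2 /\ Rabs (t * (q * x)) < 1/2).
  { intros t Ht.
    assert (Hinv : / (2 * (Rabs x + 1)) * (2 * (Rabs x + 1)) = 1) by (field; lra).
    assert (Ht2 : t * (2 * (Rabs x + 1)) < 1) by nra.
    split; [nra|]. split.
    - rewrite Rabs_mult, Rabs_pos_eq by lra. nra.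
    - rewrite !Rabs_mult, (Rabs_pos_eq t), (Rabs_pos_eq q) by lra. nra. }
  assert (HbP : forall t, 0 < t < d -> is_pseries beta t (t / (eq_exp q t - 1))).
  { intros t Ht. apply is_pseries_R.
    apply (is_series_ext (fun n => b n * t ^ n / qfact q n)).
    - intros k. unfold beta. req. unfold Rdiv. ring.
    - apply Hb. rewrite Rabs_pos_eq by lra. lra. }
  assert (HgxP : forall t, 0 < t < d -> is_pseries gx t (t / (eq_exp q t - 1) * eq_exp q (t * x))).
  { intros t Ht. apply is_pseries_R.
    apply (is_series_ext (fun n => B n x * t ^ n / qfact q n)).
    - intros k. unfold gx. req. unfold Rdiv. ring.
    - apply HBx. rewrite Rabs_pos_eq by lra. lra. }
  assert (HgqxP : forall t, 0 < t < d -> is_pseries gqx t (t / (eq_exp q t - 1) * eq_exp q (t * (q * x)))).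
  { intros t Ht. apply is_pseries_R.
    apply (is_series_ext (fun n => B n (q * x) * t ^ n / qfact q n)).
    - intros k. unfold gqx. req. unfold Rdiv. ring.
    - apply HBqx. rewrite Rabs_pos_eq by lra. lra. }
  assert (HqgP : forall t, 0 < t < d -> is_pseries qg t (q * t / (eq_exp q (q * t) - 1) * eq_exp q (q * t * x))).
  { intros t Ht. apply is_pseries_R.
    assert (H := HgxP (q * t) ltac:(nra)). apply is_pseries_R in H.
    apply (is_series_ext (fun k => gx k * (q * t) ^ k)); [|exact H].
    intros k. unfold qg. rewrite Rpow_mult_distr. req. ring. }
  assert (radlt : forall a (r t : R), Rbar_le r (CV_radius a) -> 0 < t < r -> Rbar_lt (Rabs t) (CV_radius a)).
  { intros a r t H Ht. rewrite Rabs_pos_eq by lra. apply Rbar_lt_le_trans with r. 2: exact H. simpl. lra. }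
  assert (Rb : Rbar_le (d/2) (CV_radius beta)) by (apply LR; [lra| eexists; apply HbP; lra]).
  assert (Rqg : Rbar_le (d/2) (CV_radius qg)) by (apply LR; [lra| eexists; apply HqgP; lra]).
  assert (Re : Rbar_le (1/2) (CV_radius (epsq q))).
  { apply LR; [lra| eexists; apply E_pseries; [exact Hq| rewrite Rabs_pos_eq; lra]]. }
  assert (HA : forall k, PS_minus (PS_minus (PS_mult beta (epsq q)) beta) (PS_incr_1 (fun n => match n with O => 1 | S _ => 0 end)) k = 0).
  { apply (unique0 _ (d/2)). lra. intros t Ht.
    assert (Ht' : 0 < t < d) by lra.
    destruct (Hrng t Ht') as [Htl _].
    assert (Hat : Rabs t < 1) by (rewrite Rabs_pos_eq; lra).
    assert (Ht2 : 0 < t < 1/2) by lra.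
    assert (H1 := is_pseries_mult _ _ _ _ _ (HbP t Ht') (E_pseries q t Hq Hat)
                    (radlt _ _ _ Rb Ht) (radlt _ _ _ Re Ht2)).
    assert (H2 := is_pseries_minus _ _ _ _ _ H1 (HbP t Ht')).
    assert (H3 := is_pseries_minus _ _ _ _ _ H2 (is_pseries_incr_1 _ _ _ (e0_pseries t))).
    eapply is_pseries_eqv. exact H3.
    assert (1 + t <= eq_exp q t) by (apply E_gt1; lra).
    unfold plus, opp, scal, mult; simpl; unfold mult; simpl. req. field. lra. }
  assert (HA1 := HA 1%nat). assert (HA2 := HA 2%nat).
  unfold PS_minus, PS_mult, PS_incr_1 in HA1, HA2. simpl in HA1, HA2.
  assert (Hq1 : qint q 1 = 1) by (unfold qint; simpl; field; lra).
  assert (Hq2 : qint q 2 = 1 + q) by (unfold qint; simpl; field; lra).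
  assert (ev0 : epsq q 0 = 1) by (unfold epsq; simpl; apply Rinv_1).
  assert (ev1 : epsq q 1 = 1) by (unfold epsq; simpl; rewrite Hq1; field).
  assert (ev2 : epsq q 2 = / (1 + q)) by (unfold epsq; simpl; rewrite Hq1, Hq2; field; lra).
  unfold plus, opp in HA1, HA2; simpl in HA1, HA2.
  rewrite ev0, ev1 in HA1. rewrite ev0, ev1, ev2 in HA2.
  assert (Hb0 : beta 0%nat = 1) by lra.
  assert (Hb1 : beta 1%nat = - / (1 + q)). { rewrite Hb0 in HA2. lra. }
  clear HA HA1 HA2.
  assert (HK : forall k, PS_minus (PS_scal (/(1-q)) (PS_minus gqx (fun n => q^n * gqx n)))
     (PS_minus (PS_scal (q*x - /(1+q)) (PS_incr_1 qg))
        (PS_scal (/q) (PS_plus (PS_minus (PS_mult qg beta) qg) (PS_scal (/(1+q)) (PS_incr_1 qg))))) k = 0).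
  { apply (unique0 _ (d/2)). lra. intros t Ht.
    assert (Ht' : 0 < t < d) by lra.
    assert (Hqt' : 0 < q * t < d) by nra.
    destruct (Hrng t Ht') as [Htl [Htx Htqx]].
    assert (P1 := HgqxP t Ht').
    assert (P2 : is_pseries (fun n => q^n * gqx n) t (q * t / (eq_exp q (q * t) - 1) * eq_exp q (q * t * (q * x)))).
    { assert (H := HgqxP (q * t) Hqt'). apply is_pseries_R in H. apply is_pseries_R.
      apply (is_series_ext (fun k => gqx k * (q * t) ^ k)); [|exact H].
      intros k. rewrite Rpow_mult_distr. req. ring. }
    assert (PL := is_pseries_scal (/(1-q)) _ _ _ (Rmult_comm _ _) (is_pseries_minus _ _ _ _ _ P1 P2)).
    assert (PQ := HqgP t Ht').
    assert (PI := is_pseries_incr_1 _ _ _ PQ).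
    assert (Ht2 : 0 < t < d/2) by lra.
    assert (PM := is_pseries_mult _ _ _ _ _ PQ (HbP t Ht') (radlt _ _ _ Rqg Ht2) (radlt _ _ _ Rb Ht2)).
    assert (PR := is_pseries_minus _ _ _ _ _ (is_pseries_scal (q*x - /(1+q)) _ _ _ (Rmult_comm _ _) PI)
       (is_pseries_scal (/q) _ _ _ (Rmult_comm _ _) (is_pseries_plus _ _ _ _ _
          (is_pseries_minus _ _ _ _ _ PM PQ) (is_pseries_scal (/(1+q)) _ _ _ (Rmult_comm _ _) PI)))).
    assert (PT := is_pseries_minus _ _ _ _ _ PL PR).
    eapply is_pseries_eqv. exact PT.
    assert (Hat : Rabs t < 1) by (rewrite Rabs_pos_eq; lra).
    assert (HE1 : 1 + t <= eq_exp q t) by (apply E_gt1; lra).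
    assert (HE2 : 1 + q * t <= eq_exp q (q * t)) by (apply E_gt1; nra).
    unfold plus, opp, scal, mult; simpl; unfold mult; simpl. req.
    replace (q * t * (q * x)) with (q * (t * (q * x))) by ring.
    replace (q * t * x) with (t * (q * x)) by ring.
    rewrite (E_shift q (t * (q * x))) by (auto; lra).
    rewrite (E_shift q t) in * by (auto; lra).
    field. repeat split; nra. }
  destruct n as [|m]; [lia|].
  assert (K : / (1 - q) * (gqx (S m) - q ^ (S m) * gqx (S m)) -
     ((q * x - / (1 + q)) * qg m - / q * ((sum_f_R0 (fun k => qg k * beta (S m - k)%nat) (S m) - qg (S m)) + / (1 + q) * qg m)) = 0)
    by exact (HK (S m)).
  clear HK.
  rewrite sum_f_R0_sumR in K.
  change (sumR (fun k => qg k * beta (S m - k)%nat) (S (S m))) with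
    (sumR (fun k => qg k * beta (S m - k)%nat) m + qg m * beta (S m - m)%nat + qg (S m) * beta (S m - S m)%nat) in K.
  replace (S m - m)%nat with 1%nat in K by lia.
  rewrite Nat.sub_diag, Hb0, Hb1 in K.
  replace (S m - 1)%nat with m by lia.
  assert (Hf : forall k, 0 < qfact q k) by (intros k; assert (H := qfact_ge1 q k Hq); lra).
  assert (HS : sumR (fun k => qbinom q (S m) k * (q ^ k / q) * b (S m - k)%nat * B k x) m =
               qfact q (S m) / q * sumR (fun k => qg k * beta (S m - k)%nat) m).
  { rewrite <- sumR_scal. apply sumR_ext. intros k. unfold qg, gx, beta, qbinom.
    field. repeat split; try lra; apply Rgt_not_eq; apply Hf. }
  rewrite HS. clear HS.
  set (Ssum := sumR (fun k => qg k * beta (S m - k)%nat) m) in *.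
  unfold gqx, qg, gx in K.
  assert (Hfm := Hf m).
  assert (Hqm : q ^ (S m) < 1). { simpl. assert (H5 := qpow_bounds q m Hq). nra. }
  rewrite Hq2.
  apply Rminus_diag_uniq. rewrite <- (Rmult_0_r (qfact q m)). rewrite <- K.
  simpl qfact. unfold qint. simpl pow.
  field. simpl in Hqm. repeat split; lra.
Qed.
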